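(* Let $K$ be a simplex in a topological vector space $F$ and let $T:K\to 2^{K}$ be a correspondence with *-weakly convex graph. Then there exists $x^*\in K$ such that $x^*\in\overline{T}(x^* )$.
   Context: A simplex is the convex hull of a finite affinely independent set. For $T:X\to 2^Y$: $\mathrm{Gr}(T)=\{(x,y)\in X\times Y:y\in T(x)\}$; $\overline{T}(x)=\{y\in Y:(x,y)\in\mathrm{cl}_{X\times Y}\mathrm{Gr}(T)\}$; for $V\subset F$, $T_V(x)=(T(x)+V)\cap Y$. Weakly convex graph: $T:X\to 2^Y$ ($X,Y$ nonempty convex) has weakly convex graph if for each finite set $\{x_1,\dots,x_n\}\subset X$ there exist $y_i\in T(x_i)$ such that $\mathrm{co}\{(x_1,y_1),\dots,(x_n,y_n)\}\subset\mathrm{Gr}(T)$, equivalently $\sum_i\lambda_iy_i\in T(\sum_i\lambda_ix_i)$ for all $(\lambda_1,\dots,\lambda_n)$ with $\lambda_i\ge0$, $\sum_i\lambda_i=1$. *-weakly convex graph: $T:X\to 2^Y$, with $Y\subset F$, has *-weakly convex graph if for each neighborhood $V$ of the origin in $F$ the correspondence $T_V$ has weakly convex graph. *)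

(* Defs.v *)
From Stdlib Require Import Reals.
Open Scope R_scope.

Record TVS := {
  tv :> Type;
  vadd : tv -> tv -> tv;
  vzero : tv;
  vopp : tv -> tv;
  vscal : R -> tv -> tv;
  vadd_assoc : forall x y z, vadd x (vadd y z) = vadd (vadd x y) z;
  vadd_comm : forall x y, vadd x y = vadd y x;
  vadd_0 : forall x, vadd x vzero = x;
  vadd_opp : forall x, vadd x (vopp x) = vzero;
  vscal_1 : forall x, vscal 1 x = x;
  vscal_assoc : forall a b x, vscal a (vscal b x) = vscal (a * b) x;
  vscal_distr_v : forall a x y, vscal a (vadd x y) = vadd (vscal a x) (vscal a y);
  vscal_distr_s : forall a b x, vscal (a + b) x = vadd (vscal a x) (vscal b x);
  vopen : (tv -> Prop) -> Prop;
  vopen_full : vopen (fun _ => True);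
  vopen_inter : forall U V, vopen U -> vopen V -> vopen (fun x => U x /\ V x);
  vopen_union : forall (I : Type) (U : I -> tv -> Prop),
      (forall i, vopen (U i)) -> vopen (fun x => exists i, U i x);
  vadd_cont : forall x y (W : tv -> Prop), vopen W -> W (vadd x y) ->
      exists U V, vopen U /\ vopen V /\ U x /\ V y /\
        (forall u v, U u -> V v -> W (vadd u v));
  vscal_cont : forall a x (W : tv -> Prop), vopen W -> W (vscal a x) ->
      exists d U, 0 < d /\ vopen U /\ U x /\
        (forall b u, Rabs (b - a) < d -> U u -> W (vscal b u))
}.

Arguments vadd {_}. Arguments vzero {_}. Arguments vopp {_}.
Arguments vscal {_}. Arguments vopen {_}.

Fixpoint vsum {F : TVS} (n : nat) (f : nat -> F) : F :=
  match n with O => vzero | S k => vadd (vsum k f) (f k) end.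
Fixpoint rsum (n : nat) (f : nat -> R) : R :=
  match n with O => 0 | S k => rsum k f + f k end.

Definition aff_indep {F : TVS} (n : nat) (v : nat -> F) : Prop :=
  forall c : nat -> R, rsum n c = 0 ->
    vsum n (fun i => vscal (c i) (v i)) = vzero ->
    forall i, (i < n)%nat -> c i = 0.

Definition conv_hull {F : TVS} (n : nat) (v : nat -> F) (x : F) : Prop :=
  exists lam : nat -> R, (forall i, (i < n)%nat -> 0 <= lam i) /\
    rsum n lam = 1 /\ x = vsum n (fun i => vscal (lam i) (v i)).

Definition is_simplex {F : TVS} (K : F -> Prop) : Prop :=
  exists (n : nat) (v : nat -> F), (0 < n)%nat /\ aff_indep n v /\
    (forall x, K x <-> conv_hull n v x).

(* T : X -> 2^Y is encoded as a relation: "T x y" means y \in T(x). *)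

Definition weakly_convex_graph {F : TVS} (X : F -> Prop) (T : F -> F -> Prop)
  : Prop :=
  forall (m : nat) (xs : nat -> F),
    (forall i, (i < m)%nat -> X (xs i)) ->
    (forall i j, (i < m)%nat -> (j < m)%nat -> xs i = xs j -> i = j) ->
    exists ys : nat -> F, (forall i, (i < m)%nat -> T (xs i) (ys i)) /\
      forall lam : nat -> R, (forall i, (i < m)%nat -> 0 <= lam i) ->
        rsum m lam = 1 ->
        T (vsum m (fun i => vscal (lam i) (xs i)))
          (vsum m (fun i => vscal (lam i) (ys i))).

Definition nbhd0 {F : TVS} (V : F -> Prop) : Prop :=
  exists U, vopen U /\ U vzero /\ (forall x, U x -> V x).

Definition T_V {F : TVS} (Y : F -> Prop) (T : F -> F -> Prop) (V : F -> Prop)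
  (x y : F) : Prop :=
  Y y /\ exists t v, T x t /\ V v /\ y = vadd t v.

Definition star_weakly_convex_graph {F : TVS} (X Y : F -> Prop)
  (T : F -> F -> Prop) : Prop :=
  forall V, nbhd0 V -> weakly_convex_graph X (T_V Y T V).

(* \overline{T}(x) = { y \in Y : (x,y) \in cl_{X x Y} Gr(T) },
   closure taken in the product topology (basic open boxes U x W). *)
Definition Tbar {F : TVS} (X Y : F -> Prop) (T : F -> F -> Prop) (x y : F)
  : Prop :=
  X x /\ Y y /\
  forall U W : F -> Prop, vopen U -> vopen W -> U x -> W y ->
    exists a b, X a /\ Y b /\ T a b /\ U a /\ W b.

(* Main.v *)
Require Import Defs.
From Stdlib Require Import Reals Lra Lia List ClassicalEpsilon Classical ZArith.
Open Scope R_scope.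

Lemma vadd_0_l (F : TVS) (x : F) : vadd vzero x = x.
Proof. rewrite vadd_comm; apply vadd_0. Qed.

Lemma vadd_cancel_l (F : TVS) (a b c : F) : vadd a b = vadd a c -> b = c.
Proof.
  intro H.
  assert (E : vadd (vopp a) (vadd a b) = vadd (vopp a) (vadd a c)) by now rewrite H.
  rewrite !vadd_assoc in E. rewrite (vadd_comm _ (vopp a) a), vadd_opp, !vadd_0_l in E.
  exact E.
Qed.

Lemma videm (F : TVS) (y : F) : y = vadd y y -> y = vzero.
Proof.
  intro H. apply (vadd_cancel_l F y). rewrite vadd_0. symmetry; exact H.
Qed.

Lemma vscal_0_l (F : TVS) (x : F) : vscal 0 x = vzero.
Proof. apply videm. rewrite <- vscal_distr_s. f_equal; ring. Qed.

Lemma vscal_0_r (F : TVS) (a : R) : vscal a (@vzero F) = vzero.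
Proof. apply videm. rewrite <- vscal_distr_v. rewrite vadd_0. reflexivity. Qed.

Lemma vscal_m1 (F : TVS) (x : F) : vadd x (vscal (-1) x) = vzero.
Proof.
  rewrite <- (vscal_1 F x) at 1. rewrite <- vscal_distr_s.
  replace (1 + -1) with 0 by ring. apply vscal_0_l.
Qed.

Lemma vadd_shuffle (F : TVS) (a b c d : F) :
  vadd (vadd a b) (vadd c d) = vadd (vadd a c) (vadd b d).
Proof.
  rewrite !vadd_assoc. f_equal. rewrite <- !vadd_assoc. f_equal. apply vadd_comm.
Qed.

Lemma vsum_ext (F : TVS) n (f g : nat -> F) :
  (forall i, (i < n)%nat -> f i = g i) -> vsum n f = vsum n g.
Proof.
  induction n; intro H; simpl; auto.
  rewrite IHn by (intros; apply H; lia). rewrite H by lia. reflexivity.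
Qed.

Lemma vsum_add (F : TVS) n (f g : nat -> F) :
  vsum n (fun i => vadd (f i) (g i)) = vadd (vsum n f) (vsum n g).
Proof.
  induction n; simpl. symmetry; apply vadd_0.
  rewrite IHn. apply vadd_shuffle.
Qed.

Lemma vsum_zero (F : TVS) n : vsum n (fun _ => @vzero F) = vzero.
Proof. induction n; simpl; auto. rewrite IHn; apply vadd_0. Qed.

Lemma vsum_scal (F : TVS) n a (f : nat -> F) :
  vscal a (vsum n f) = vsum n (fun i => vscal a (f i)).
Proof.
  induction n; simpl. apply vscal_0_r.
  rewrite vscal_distr_v, IHn. reflexivity.
Qed.

Lemma vsum_swap (F : TVS) n m (g : nat -> nat -> F) :
  vsum n (fun i => vsum m (fun j => g i j)) = vsum m (fun j => vsum n (fun i => g i j)).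
Proof.
  induction n; simpl. symmetry; apply vsum_zero.
  rewrite IHn. rewrite <- vsum_add. reflexivity.
Qed.

Lemma vscal_rsum (F : TVS) n a (x : F) :
  vscal (rsum n a) x = vsum n (fun i => vscal (a i) x).
Proof.
  induction n; simpl. apply vscal_0_l.
  rewrite vscal_distr_s, IHn. reflexivity.
Qed.

Lemma vsum_delta (F : TVS) n k a (w : nat -> F) : (k < n)%nat ->
  vsum n (fun i => vscal (if Nat.eqb i k then a else 0) (w i)) = vscal a (w k).
Proof.
  induction n; intro H; [lia|]. simpl.
  destruct (Nat.eqb n k) eqn:E.
  - apply Nat.eqb_eq in E; subst.
    rewrite (vsum_ext F k _ (fun _ => vzero)). rewrite vsum_zero, vadd_0_l. reflexivity.
    intros i Hi. destruct (Nat.eqb i k) eqn:E2. apply Nat.eqb_eq in E2; lia. apply vscal_0_l.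
  - apply Nat.eqb_neq in E. rewrite IHn by lia. rewrite vscal_0_l, vadd_0. reflexivity.
Qed.

Lemma rsum_ext n (f g : nat -> R) :
  (forall i, (i < n)%nat -> f i = g i) -> rsum n f = rsum n g.
Proof.
  induction n; intro H; simpl; auto.
  rewrite IHn by (intros; apply H; lia). rewrite H by lia. reflexivity.
Qed.

Lemma rsum_add n (f g : nat -> R) : rsum n (fun i => f i + g i) = rsum n f + rsum n g.
Proof. induction n; simpl; [ring|]. rewrite IHn; ring. Qed.

Lemma rsum_scal n a (f : nat -> R) : a * rsum n f = rsum n (fun i => a * f i).
Proof. induction n; simpl; [ring|]. rewrite <- IHn; ring. Qed.

Lemma rsum_zero n : rsum n (fun _ => 0) = 0.
Proof. induction n; simpl; [ring|]. rewrite IHn; ring. Qed.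

Lemma rsum_swap n m (g : nat -> nat -> R) :
  rsum n (fun i => rsum m (fun j => g i j)) = rsum m (fun j => rsum n (fun i => g i j)).
Proof.
  induction n; simpl. symmetry; apply rsum_zero.
  rewrite IHn. rewrite <- rsum_add. reflexivity.
Qed.

Lemma rsum_const n a : rsum n (fun _ => a) = INR n * a.
Proof. induction n; cbn [rsum]; [simpl; ring|]. rewrite IHn. rewrite S_INR. ring. Qed.

Lemma rsum_delta n k a : (k < n)%nat ->
  rsum n (fun i => if Nat.eqb i k then a else 0) = a.
Proof.
  induction n; intro H; [lia|]. simpl.
  destruct (Nat.eqb n k) eqn:E.
  - apply Nat.eqb_eq in E; subst.
    rewrite (rsum_ext k _ (fun _ => 0)). rewrite rsum_zero; ring.
    intros i Hi. destruct (Nat.eqb i k) eqn:E2. apply Nat.eqb_eq in E2; lia. reflexivity.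
  - apply Nat.eqb_neq in E. rewrite IHn by lia. ring.
Qed.

Lemma rsum_nonneg n (f : nat -> R) : (forall i, (i < n)%nat -> 0 <= f i) -> 0 <= rsum n f.
Proof.
  induction n; intro H; simpl; [lra|].
  assert (0 <= rsum n f) by (apply IHn; intros; apply H; lia).
  assert (0 <= f n) by (apply H; lia). lra.
Qed.

Lemma rsum_entry_le n (f : nat -> R) k : (forall i, (i < n)%nat -> 0 <= f i) -> (k < n)%nat ->
  f k <= rsum n f.
Proof.
  induction n; intros H Hk; [lia|]. simpl.
  assert (0 <= rsum n f) by (apply rsum_nonneg; intros; apply H; lia).
  destruct (Nat.eq_dec k n). subst; lra.
  assert (f k <= rsum n f) by (apply IHn; [intros; apply H; lia| lia]).
  assert (0 <= f n) by (apply H; lia). lra.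
Qed.

Lemma rsum_close n (mu c : nat -> R) r :
  (forall i, (i < n)%nat -> Rabs (mu i - c i) < r) ->
  Rabs (rsum n mu - rsum n c) <= INR n * r.
Proof.
  induction n; intro H; cbn [rsum].
  - simpl. replace (0-0) with 0 by ring. rewrite Rabs_R0. lra.
  - rewrite S_INR.
    replace (rsum n mu + mu n - (rsum n c + c n)) with
      ((rsum n mu - rsum n c) + (mu n - c n)) by ring.
    eapply Rle_trans. apply Rabs_triang.
    assert (Rabs (rsum n mu - rsum n c) <= INR n * r) by (apply IHn; intros; apply H; lia).
    assert (Rabs (mu n - c n) < r) by (apply H; lia). lra.
Qed.

Definition phi (F : TVS) n (v : nat -> F) (c : nat -> R) : F :=
  vsum n (fun i => vscal (c i) (v i)).

Lemma phi_cont (F : TVS) n (v : nat -> F) (c : nat -> R) (W : F -> Prop) :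
  vopen W -> W (phi F n v c) ->
  exists d, 0 < d /\ forall nu, (forall i, (i < n)%nat -> Rabs (nu i - c i) < d) ->
    W (phi F n v nu).
Proof.
  revert W. induction n; intros W HW Hc.
  - exists 1; split; [lra|]. intros nu _. exact Hc.
  - unfold phi in Hc; simpl in Hc.
    destruct (vadd_cont F _ _ W HW Hc) as (U & V & HU & HV & Ux & Vy & HUV).
    destruct (IHn U HU Ux) as (d1 & Hd1 & H1).
    destruct (vscal_cont F _ _ V HV Vy) as (d2 & U2 & Hd2 & HU2 & U2v & H2).
    exists (Rmin d1 d2); split. apply Rmin_pos; auto.
    intros nu Hnu. unfold phi; simpl. apply HUV.
    + apply H1. intros i Hi. eapply Rlt_le_trans. apply Hnu; lia. apply Rmin_l.
    + apply H2; auto. eapply Rlt_le_trans. apply Hnu; lia. apply Rmin_r.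
Qed.

Lemma phi_add (F : TVS) n (v : nat -> F) a b :
  vadd (phi F n v a) (phi F n v b) = phi F n v (fun i => a i + b i).
Proof.
  unfold phi. rewrite <- vsum_add. apply vsum_ext. intros. symmetry; apply vscal_distr_s.
Qed.

Lemma phi_zero (F : TVS) n (v : nat -> F) : phi F n v (fun _ => 0) = vzero.
Proof.
  unfold phi. rewrite (vsum_ext F n _ (fun _ => vzero)). apply vsum_zero.
  intros; apply vscal_0_l.
Qed.

Lemma phi_comb (F : TVS) n (v : nat -> F) (l : nat -> R) (M : nat -> nat -> R) :
  vsum n (fun i => vscal (l i) (phi F n v (M i))) =
  phi F n v (fun j => rsum n (fun i => l i * M i j)).
Proof.
  unfold phi.
  rewrite (vsum_ext F n _ (fun i => vsum n (fun j => vscal (l i * M i j) (v j)))).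
  rewrite vsum_swap. apply vsum_ext. intros j Hj. symmetry; apply vscal_rsum.
  intros i Hi. rewrite vsum_scal. apply vsum_ext. intros. apply vscal_assoc.
Qed.

Definition box n (c : nat -> R) := forall i, (i < n)%nat -> 0 <= c i <= 1.

Lemma interval_compact (eps : R -> R) : (forall t, 0 < eps t) ->
  exists L : list R, (forall t, In t L -> 0 <= t <= 1) /\
    forall s, 0 <= s <= 1 -> exists t, In t L /\ Rabs (s - t) < eps t.
Proof.
  intro Heps.
  set (fam := mkfamily (fun t => 0 <= t <= 1)
        (fun t y => 0 <= t <= 1 /\ Rabs (y - t) < eps t)
        (fun t (H : exists y, 0 <= t <= 1 /\ Rabs (y - t) < eps t) =>
           match H with ex_intro _ y Hy => proj1 Hy end)).
  destruct (compact_P3 0 1 fam) as [D [Hcov [l Hl]]].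
  - split.
    + intros x Hx. exists x. simpl. split; auto. replace (x - x) with 0 by ring.
      rewrite Rabs_R0; auto.
    + intros t y Hy. simpl in Hy. destruct Hy as [Ht Hy].
      exists (mkposreal _ (Rgt_minus _ _ Hy)). intros z Hz. unfold disc in Hz; simpl in Hz.
      split; auto.
      replace (z - t) with ((z - y) + (y - t)) by ring.
      eapply Rle_lt_trans. apply Rabs_triang. lra.
  - exists l. split.
    + intros t Ht. apply Hl in Ht. unfold subfamily, intersection_domain in Ht; simpl in Ht. tauto.
    + intros s Hs. destruct (Hcov s Hs) as [t Ht]. simpl in Ht.
      destruct Ht as [[Ht1 Ht2] HD]. exists t. split; auto. apply Hl. unfold subfamily, intersection_domain; simpl. split; auto.
Qed.

Definition minlist (f : (nat -> R) -> R) (L : list (nat -> R)) : R :=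
  fold_right (fun c m => Rmin (f c) m) 1 L.

Lemma minlist_pos f L : (forall c, 0 < f c) -> 0 < minlist f L.
Proof.
  intro H; induction L; simpl; [lra|]. apply Rmin_pos; auto.
Qed.

Lemma minlist_le f L c : In c L -> minlist f L <= f c.
Proof.
  induction L; simpl; [tauto|]. intros [->|H].
  apply Rmin_l. eapply Rle_trans. apply Rmin_r. auto.
Qed.

Definition ext n (c : nat -> R) (t : R) : nat -> R :=
  fun i => if Nat.ltb i n then c i else t.

Lemma box_compact n (delta : (nat -> R) -> R) : (forall c, 0 < delta c) ->
  exists L : list (nat -> R), (forall c, In c L -> box n c) /\
    forall mu, box n mu -> exists c, In c L /\
      forall i, (i < n)%nat -> Rabs (mu i - c i) < delta c.
Proof.
  revert delta. induction n; intros delta Hd.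
  - exists ((fun _ => 0) :: nil). split.
    + intros c _ i Hi; lia.
    + intros mu _. exists (fun _ => 0). split. left; auto. intros; lia.
  - assert (IH' : forall t : R, exists L : list (nat -> R), (forall c, In c L -> box n c) /\
      forall mu, box n mu -> exists c, In c L /\
        forall i, (i < n)%nat -> Rabs (mu i - c i) < delta (ext n c t)).
    { intro t. apply IHn. intro; apply Hd. }
    pose (Lf := fun t => proj1_sig (constructive_indefinite_description _ (IH' t))).
    assert (HLf : forall t, (forall c, In c (Lf t) -> box n c) /\
      forall mu, box n mu -> exists c, In c (Lf t) /\
        forall i, (i < n)%nat -> Rabs (mu i - c i) < delta (ext n c t)).
    { intro t. unfold Lf. apply proj2_sig. }
    pose (eps := fun t => minlist (fun c => delta (ext n c t)) (Lf t)).
    destruct (interval_compact eps) as [TL [HT1 HT2]].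
    { intro t; apply minlist_pos; intro; apply Hd. }
    exists (flat_map (fun t => map (fun c => ext n c t) (Lf t)) TL). split.
    + intros c Hc. apply in_flat_map in Hc. destruct Hc as [t [Ht Hc]].
      apply in_map_iff in Hc. destruct Hc as [c' [<- Hc']].
      intros i Hi. unfold ext. destruct (Nat.ltb i n) eqn:E.
      apply Nat.ltb_lt in E. apply (proj1 (HLf t) c' Hc'); auto.
      apply HT1; auto.
    + intros mu Hmu.
      destruct (HT2 (mu n)) as [t [Ht Hst]]. apply Hmu; lia.
      destruct (proj2 (HLf t) mu) as [c [Hc Hclose]].
      { intros i Hi; apply Hmu; lia. }
      exists (ext n c t). split.
      * apply in_flat_map. exists t. split; auto. apply in_map_iff. exists c; auto.
      * intros i Hi. unfold ext at 1. destruct (Nat.ltb i n) eqn:E.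
        -- apply Nat.ltb_lt in E. apply Hclose; auto.
        -- apply Nat.ltb_ge in E. assert (i = n) by lia. subst i.
           eapply Rlt_le_trans. apply Hst. unfold eps. apply minlist_le with (f := fun c => delta (ext n c t)). auto.
Qed.

Definition simplex n (l : nat -> R) := (forall i, (i < n)%nat -> 0 <= l i) /\ rsum n l = 1.

Definition mulM n (M : nat -> nat -> R) (l : nat -> R) : nat -> R :=
  fun j => rsum n (fun i => l i * M i j).

Lemma mulM_simplex n M l : (forall i, (i < n)%nat -> simplex n (M i)) -> simplex n l ->
  simplex n (mulM n M l).
Proof.
  intros HM [Hl1 Hl2]. split.
  - intros j Hj. unfold mulM. apply rsum_nonneg. intros i Hi.
    apply Rmult_le_pos. auto. apply (proj1 (HM i Hi)); auto.
  - unfold mulM. rewrite rsum_swap. rewrite <- Hl2. apply rsum_ext. intros i Hi.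
    rewrite <- rsum_scal. rewrite (proj2 (HM i Hi)). ring.
Qed.

Fixpoint pw n M (e0 : nat -> R) (m : nat) : nat -> R :=
  match m with O => e0 | S m' => mulM n M (pw n M e0 m') end.

Lemma pw_simplex n M e0 m : (forall i, (i < n)%nat -> simplex n (M i)) -> simplex n e0 ->
  simplex n (pw n M e0 m).
Proof. intros HM He. induction m; simpl; auto. apply mulM_simplex; auto. Qed.

Definition avg n M e0 k : nat -> R := fun j => rsum k (fun m => pw n M e0 m j) / INR k.

Lemma simplex_le1 n l i : simplex n l -> (i < n)%nat -> l i <= 1.
Proof. intros [H1 H2] Hi. rewrite <- H2. apply rsum_entry_le; auto. Qed.

Lemma avg_simplex n M e0 k : (0 < k)%nat -> (forall i, (i < n)%nat -> simplex n (M i)) ->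
  simplex n e0 -> simplex n (avg n M e0 k).
Proof.
  intros Hk HM He. assert (HkR : 0 < INR k) by (apply lt_0_INR; lia). split.
  - intros j Hj. unfold avg. unfold Rdiv. apply Rmult_le_pos; [| left; apply Rinv_0_lt_compat; auto]. apply rsum_nonneg.
    intros m _. apply (proj1 (pw_simplex n M e0 m HM He)); auto.
  - unfold avg. unfold Rdiv.
    rewrite (rsum_ext n _ (fun j => / INR k * rsum k (fun m => pw n M e0 m j))).
    rewrite <- rsum_scal. rewrite rsum_swap.
    rewrite (rsum_ext k _ (fun _ => 1)). rewrite rsum_const. field. lra.
    intros m _. apply (proj2 (pw_simplex n M e0 m HM He)).
    intros; ring.
Qed.

Lemma telescope k (g : nat -> R) : rsum k g - rsum k (fun m => g (S m)) = g O - g k.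
Proof. induction k; cbn [rsum]. ring. lra. Qed.

Lemma avg_close n M e0 k j : (0 < k)%nat -> (forall i, (i < n)%nat -> simplex n (M i)) ->
  simplex n e0 -> (j < n)%nat ->
  Rabs (avg n M e0 k j - mulM n M (avg n M e0 k) j) <= 1 / INR k.
Proof.
  intros Hk HM He Hj. assert (HkR : 0 < INR k) by (apply lt_0_INR; lia).
  assert (E : mulM n M (avg n M e0 k) j = rsum k (fun m => pw n M e0 (S m) j) / INR k).
  { unfold mulM, avg. unfold Rdiv.
    rewrite (rsum_ext n _ (fun i => /INR k * rsum k (fun m => pw n M e0 m i * M i j))).
    rewrite <- rsum_scal, rsum_swap. rewrite Rmult_comm. reflexivity.
    intros i _. rewrite (Rmult_comm (rsum k _)). rewrite Rmult_assoc. f_equal.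
    rewrite Rmult_comm, rsum_scal. apply rsum_ext. intros; ring. }
  rewrite E. unfold avg.
  replace (rsum k (fun m => pw n M e0 m j) / INR k - rsum k (fun m => pw n M e0 (S m) j) / INR k)
    with ((rsum k (fun m => pw n M e0 m j) - rsum k (fun m => pw n M e0 (S m) j)) / INR k)
    by (field; lra).
  rewrite (telescope k (fun m => pw n M e0 m j)).
  assert (A0 := simplex_le1 n _ j (pw_simplex n M e0 0 HM He) Hj).
  assert (Ak := simplex_le1 n _ j (pw_simplex n M e0 k HM He) Hj).
  assert (B0 := proj1 (pw_simplex n M e0 0 HM He) j Hj).
  assert (Bk := proj1 (pw_simplex n M e0 k HM He) j Hj).
  unfold Rdiv. rewrite Rabs_mult, Rabs_inv. rewrite (Rabs_pos_eq (INR k)) by lra.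
  apply Rmult_le_compat_r. left; apply Rinv_0_lt_compat; auto.
  apply Rabs_le. simpl in *. lra.
Qed.

Lemma nat_unbounded (r : R) : exists k : nat, r < INR k.
Proof.
  destruct (archimed r) as [H1 H2].
  destruct (Z_le_gt_dec 0 (up r)) as [Hz|Hz].
  - exists (Z.to_nat (up r)). rewrite INR_IZR_INZ. rewrite Z2Nat.id by lia. lra.
  - exists O. simpl. assert (Hz2 : (up r < 0)%Z) by lia. apply IZR_lt in Hz2. lra.
Qed.

Lemma cancel_aux (F : TVS) (t w e : F) :
  vadd (vadd (vadd t w) e) (vadd (vscal (-1) w) (vscal (-1) e)) = t.
Proof.
  rewrite <- (vadd_assoc F t w e). rewrite <- vadd_assoc. rewrite vadd_shuffle.
  rewrite !vscal_m1, vadd_0, vadd_0. reflexivity.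
Qed.

Lemma phi_ext (F : TVS) n v a b : (forall i, (i < n)%nat -> a i = b i) ->
  phi F n v a = phi F n v b.
Proof. intro H. unfold phi. apply vsum_ext. intros i Hi. rewrite H; auto. Qed.

Theorem theorem6 (F : TVS) (K : F -> Prop) (T : F -> F -> Prop) :
  is_simplex K ->
  (forall x y, K x -> T x y -> K y) ->
  star_weakly_convex_graph K K T ->
  exists x, K x /\ Tbar K K T x x.
Proof.
  intros [n [v [Hn [Hind HK]]]] Hcl Hstar.
  assert (Kphi : forall l, simplex n l -> K (phi F n v l)).
  { intros l [H1 H2]. apply HK. exists l. auto. }
  assert (Kinv : forall x, K x -> exists l, simplex n l /\ x = phi F n v l).
  { intros x Hx. apply HK in Hx. destruct Hx as [l [H1 [H2 H3]]]. exists l. split; [split|]; auto. }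
  apply NNPP. intro Hno.
  assert (Hloc : forall c, simplex n c -> exists d, 0 < d /\ exists O : F -> Prop,
     vopen O /\ O vzero /\ forall nu, simplex n nu ->
       (forall i, (i < n)%nat -> Rabs (nu i - c i) < d) ->
       forall t w e, O w -> O e -> T (phi F n v nu) t ->
         phi F n v nu = vadd (vadd t w) e -> False).
  { intros c Hc. set (x := phi F n v c).
    assert (Kx : K x) by (apply Kphi; auto).
    assert (Hsep : exists U W : F -> Prop, vopen U /\ vopen W /\ U x /\ W x /\
      forall a b, K a -> K b -> T a b -> U a -> W b -> False).
    { apply NNPP. intro Hn2. apply Hno. exists x. split; auto. split; auto. split; auto.
      intros U W HU HW Ux Wx. apply NNPP. intro Hn3. apply Hn2.
      exists U, W. repeat split; auto. intros a b Ka Kb Tab Ua Wb. apply Hn3.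
      exists a, b. auto. }
    destruct Hsep as (U & W & HU & HW & Ux & Wx & Hsep).
    assert (Wx0 : W (vadd x vzero)) by (rewrite vadd_0; auto).
    destruct (vadd_cont F _ _ W HW Wx0) as (A & B & HA & HB & Ax & B0 & HAB).
    assert (B00 : B (vadd vzero vzero)) by (rewrite vadd_0; auto).
    destruct (vadd_cont F _ _ B HB B00) as (B1 & B2 & HB1 & HB2 & B10 & B20 & HB12).
    assert (B1m : B1 (vscal (-1) vzero)) by (rewrite vscal_0_r; auto).
    destruct (vscal_cont F _ _ B1 HB1 B1m) as (d1 & U1 & Hd1 & HU1 & U10 & HU1').
    assert (B2m : B2 (vscal (-1) vzero)) by (rewrite vscal_0_r; auto).
    destruct (vscal_cont F _ _ B2 HB2 B2m) as (d2 & U2 & Hd2 & HU2 & U20 & HU2').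
    destruct (phi_cont F n v c (fun z => A z /\ U z) (vopen_inter F _ _ HA HU) (conj Ax Ux))
      as (d & Hd & Hphi).
    exists d. split; auto. exists (fun z => U1 z /\ U2 z). split; [apply vopen_inter; auto|].
    split; [split; auto|].
    intros nu Hnu Hclose t w e [Uw1 Uw2] [Ue1 Ue2] Ht Heq.
    destruct (Hphi nu Hclose) as [Anu Unu].
    apply (Hsep (phi F n v nu) t); auto.
    - apply Hcl with (phi F n v nu); auto.
    - rewrite <- (cancel_aux F t w e). rewrite <- Heq. apply HAB; auto.
      apply HB12.
      + apply HU1'; auto. replace (-1 - -1) with 0 by ring. rewrite Rabs_R0; auto.
      + apply HU2'; auto. replace (-1 - -1) with 0 by ring. rewrite Rabs_R0; auto. }
  assert (Hgap : forall c, box n c -> ~ simplex n c -> exists d, 0 < d /\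
     forall nu, (forall i, (i < n)%nat -> Rabs (nu i - c i) < d) -> ~ simplex n nu).
  { intros c Hb Hc.
    assert (Hs : rsum n c <> 1).
    { intro E. apply Hc. split; auto. intros i Hi; apply Hb; auto. }
    assert (Hpos : 0 < Rabs (rsum n c - 1)) by (apply Rabs_pos_lt; lra).
    assert (HnR : 0 <= INR n) by apply pos_INR.
    exists (Rabs (rsum n c - 1) / (INR n + 1)). split.
    { apply Rdiv_lt_0_compat; lra. }
    intros nu Hclose [_ Hnu].
    assert (Hrc := rsum_close n nu c _ Hclose).
    rewrite Hnu in Hrc.
    assert (INR n * (Rabs (rsum n c - 1) / (INR n + 1)) < Rabs (rsum n c - 1)).
    { unfold Rdiv. rewrite <- Rmult_assoc. apply Rlt_le_trans with
        ((INR n + 1) * Rabs (rsum n c - 1) * / (INR n + 1)).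
      apply Rmult_lt_compat_r. apply Rinv_0_lt_compat; lra. nra.
      right. field. lra. }
    rewrite <- Rabs_Ropp in Hrc. replace (- (1 - rsum n c)) with (rsum n c - 1) in Hrc by ring.
    lra. }
  assert (Hall : forall c, exists p : R * (F -> Prop), 0 < fst p /\ vopen (snd p) /\ snd p vzero /\
     (simplex n c -> forall nu, simplex n nu ->
       (forall i, (i < n)%nat -> Rabs (nu i - c i) < fst p) ->
       forall t w e, snd p w -> snd p e -> T (phi F n v nu) t ->
         phi F n v nu = vadd (vadd t w) e -> False) /\
     (box n c -> ~ simplex n c -> forall nu,
       (forall i, (i < n)%nat -> Rabs (nu i - c i) < fst p) -> ~ simplex n nu)).
  { intro c. destruct (classic (simplex n c)) as [Hc|Hc].
    - destruct (Hloc c Hc) as (d & Hd & O & HO & O0 & HP).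
      exists (d, O). simpl. split; [auto|split;[auto|split;[auto|split]]].
      intros _; apply HP. intros _ Hc'; contradiction.
    - destruct (classic (box n c)) as [Hb|Hb].
      + destruct (Hgap c Hb Hc) as (d & Hd & HP).
        exists (d, fun _ => True). simpl. split; [auto|split;[apply vopen_full|split;[auto|split]]].
        intro; contradiction. intros _ _; apply HP.
      + exists (1, fun _ => True). simpl. split; [lra|split;[apply vopen_full|split;[auto|split]]].
        intro; contradiction. intro; contradiction. }
  pose (P := fun c => proj1_sig (constructive_indefinite_description _ (Hall c))).
  assert (HP : forall c, 0 < fst (P c) /\ vopen (snd (P c)) /\ snd (P c) vzero /\
     (simplex n c -> forall nu, simplex n nu ->
       (forall i, (i < n)%nat -> Rabs (nu i - c i) < fst (P c)) ->
       forall t w e, snd (P c) w -> snd (P c) e -> T (phi F n v nu) t ->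
         phi F n v nu = vadd (vadd t w) e -> False) /\
     (box n c -> ~ simplex n c -> forall nu,
       (forall i, (i < n)%nat -> Rabs (nu i - c i) < fst (P c)) -> ~ simplex n nu)).
  { intro c. unfold P. apply proj2_sig. }
  destruct (box_compact n (fun c => fst (P c))) as [L [HLb HLc]].
  { intro c; apply HP. }
  assert (HO : forall L' : list (nat -> R), exists O : F -> Prop, vopen O /\ O vzero /\
     forall z, O z -> forall c, In c L' -> snd (P c) z).
  { induction L' as [|c L' IH].
    - exists (fun _ => True). split; [apply vopen_full|]. split; auto. intros z _ c [].
    - destruct IH as (O & HO1 & HO2 & HO3).
      exists (fun z => snd (P c) z /\ O z). split; [apply vopen_inter; auto; apply HP|].
      split; [split; auto; apply HP|].
      intros z [Hz1 Hz2] c' [<-|Hc']; auto. }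
  destruct (HO L) as (O & HO1 & HO2 & HO3).
  assert (Hwc : weakly_convex_graph K (T_V K T O)).
  { apply Hstar. exists O; auto. }
  set (dl := fun k i : nat => if Nat.eqb i k then 1 else 0).
  assert (Hdl : forall k, (k < n)%nat -> simplex n (dl k)).
  { intros k Hk. split. intros i _. unfold dl. destruct (Nat.eqb i k); lra.
    unfold dl. apply rsum_delta; auto. }
  assert (Hvk : forall k, (k < n)%nat -> v k = phi F n v (dl k)).
  { intros k Hk. unfold phi, dl. rewrite vsum_delta by auto. symmetry; apply vscal_1. }
  assert (Hdist : forall i j, (i < n)%nat -> (j < n)%nat -> v i = v j -> i = j).
  { intros i j Hi Hj Eij. destruct (Nat.eq_dec i j) as [|Hne]; auto. exfalso.
    set (cc := fun k => dl i k + (-1) * dl j k).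
    assert (H1 : rsum n cc = 0).
    { unfold cc. rewrite rsum_add, <- rsum_scal. unfold dl. rewrite !rsum_delta by auto. ring. }
    assert (H2 : vsum n (fun k => vscal (cc k) (v k)) = vzero).
    { unfold cc. rewrite (vsum_ext F n _ (fun k => vadd (vscal (dl i k) (v k))
         (vscal (-1) (vscal (dl j k) (v k))))).
      rewrite vsum_add, <- vsum_scal. unfold dl. rewrite !vsum_delta by auto.
      rewrite !vscal_1, Eij. apply vscal_m1.
      intros k _. rewrite vscal_distr_s, vscal_assoc. reflexivity. }
    assert (H3 := Hind cc H1 H2 i Hi). unfold cc, dl in H3.
    rewrite Nat.eqb_refl in H3. apply Nat.eqb_neq in Hne. rewrite Hne in H3. lra. }
  destruct (Hwc n v) as [ys [Hys1 Hys2]].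
  { intros i Hi. rewrite Hvk by auto. apply Kphi; auto. }
  { exact Hdist. }
  assert (HMex : forall i, exists Mi, (i < n)%nat -> simplex n Mi /\ ys i = phi F n v Mi).
  { intro i. destruct (lt_dec i n) as [Hi|Hi].
    - destruct (Hys1 i Hi) as [Ky _]. destruct (Kinv _ Ky) as [l [Hl1 Hl2]].
      exists l; auto.
    - exists (fun _ => 0). intro; lia. }
  pose (M := fun i => proj1_sig (constructive_indefinite_description _ (HMex i))).
  assert (HM : forall i, (i < n)%nat -> simplex n (M i) /\ ys i = phi F n v (M i)).
  { intro i. unfold M. apply proj2_sig. }
  assert (HMs : forall i, (i < n)%nat -> simplex n (M i)) by (intros; apply HM; auto).
  assert (O0 : O (phi F n v (fun _ => 0))) by (rewrite phi_zero; auto).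
  destruct (phi_cont F n v (fun _ => 0) O HO1 O0) as (eta & Heta & Hcont).
  destruct (nat_unbounded (1 / eta)) as [k0 Hk0].
  set (k := S k0).
  assert (HkR : 0 < INR k) by (apply lt_0_INR; unfold k; lia).
  assert (Hk1 : 1 / INR k < eta).
  { unfold k. rewrite S_INR. assert (0 <= INR k0) by apply pos_INR.
    apply Rmult_lt_reg_r with (INR k0 + 1). lra.
    replace (1 / (INR k0 + 1) * (INR k0 + 1)) with 1 by (field; lra).
    apply Rmult_lt_reg_r with (/ eta). apply Rinv_0_lt_compat; auto.
    replace (eta * (INR k0 + 1) * / eta) with (INR k0 + 1) by (field; lra).
    unfold Rdiv in Hk0. lra. }
  set (e0 := dl 0%nat).
  assert (He0 : simplex n e0) by (apply Hdl; lia).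
  set (Lam := avg n M e0 k).
  assert (HLam : simplex n Lam) by (apply avg_simplex; auto; unfold k; lia).
  assert (HLbox : box n Lam).
  { intros i Hi. split. apply HLam; auto. apply (simplex_le1 n); auto. }
  destruct (HLc Lam HLbox) as [c [HcL Hcc]].
  assert (Hcs : simplex n c).
  { apply NNPP. intro Hns. apply (proj2 (proj2 (proj2 (proj2 (HP c)))) (HLb c HcL) Hns Lam Hcc HLam). }
  destruct (Hys2 Lam (proj1 HLam) (proj2 HLam)) as [_ [t [w [Ht [Ow Heq]]]]].
  assert (Eys : vsum n (fun i => vscal (Lam i) (ys i)) = phi F n v (mulM n M Lam)).
  { rewrite (vsum_ext F n _ (fun i => vscal (Lam i) (phi F n v (M i)))).
    apply phi_comb. intros i Hi. rewrite (proj2 (HM i Hi)). reflexivity. }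
  rewrite Eys in Heq.
  set (e := phi F n v (fun j => Lam j - mulM n M Lam j)).
  assert (Oe : O e).
  { apply Hcont. intros i Hi. replace (Lam i - mulM n M Lam i - 0) with
      (avg n M e0 k i - mulM n M (avg n M e0 k) i) by (unfold Lam; ring).
    eapply Rle_lt_trans. apply avg_close; auto. unfold k; lia. auto. }
  assert (Hx : phi F n v Lam = vadd (vadd t w) e).
  { rewrite <- Heq. unfold e. rewrite phi_add. apply phi_ext. intros; ring. }
  apply (proj1 (proj2 (proj2 (proj2 (HP c)))) Hcs Lam HLam Hcc t w e (HO3 w Ow c HcL) (HO3 e Oe c HcL) Ht Hx).
Qed.
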